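(* Let $G$ be a Hausdorff topological group with neutral element $e$ that is not NSS, and let $d:G\times G\to[0,\infty)$ be a continuous map with $d(e,e)=0$. Then there exists a sequence $(g_n)_{n\in\mathbb N}$ in $G\setminus\{e\}$ such that $\sum_{n\in\mathbb N} d(e,g_n^{m_n})<\infty$ for every sequence $(m_n)_{n\in\mathbb N}\in\mathbb Z^{\mathbb N}$.
   Context: A topological group $G$ is NSS if some neighborhood of $e$ contains no nontrivial subgroup of $G$. *)

(* Defs.v *)
From Stdlib Require Import Reals ZArith.
Open Scope R_scope.

Section TopGroupDefs.
Context {G : Type}.

Definition is_group (mul : G -> G -> G) (inv : G -> G) (e : G) : Prop :=
  (forall x y z, mul x (mul y z) = mul (mul x y) z) /\
  (forall x, mul e x = x) /\ (forall x, mul x e = x) /\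
  (forall x, mul (inv x) x = e) /\ (forall x, mul x (inv x) = e).

Definition is_topology (open : (G -> Prop) -> Prop) : Prop :=
  open (fun _ => True) /\ open (fun _ => False) /\
  (forall (F : (G -> Prop) -> Prop),
      (forall U, F U -> open U) -> open (fun x => exists U, F U /\ U x)) /\
  (forall U V, open U -> open V -> open (fun x => U x /\ V x)).

Definition is_topological_group (mul : G -> G -> G) (inv : G -> G) (e : G)
    (open : (G -> Prop) -> Prop) : Prop :=
  is_group mul inv e /\ is_topology open /\
  (forall x y (W : G -> Prop), open W -> W (mul x y) ->
     exists U V, open U /\ open V /\ U x /\ V y /\
       (forall u v, U u -> V v -> W (mul u v))) /\
  (forall W, open W -> open (fun x => W (inv x))).

Definition hausdorff (open : (G -> Prop) -> Prop) : Prop :=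
  forall x y, x <> y -> exists U V, open U /\ open V /\ U x /\ V y /\
     (forall z, U z -> V z -> False).

Definition neighborhood (open : (G -> Prop) -> Prop) (x : G) (N : G -> Prop) : Prop :=
  exists U, open U /\ U x /\ (forall z, U z -> N z).

Definition is_subgroup (mul : G -> G -> G) (inv : G -> G) (e : G) (H : G -> Prop) : Prop :=
  H e /\ (forall x y, H x -> H y -> H (mul x y)) /\ (forall x, H x -> H (inv x)).

Definition nontrivial_subgroup mul inv e (H : G -> Prop) : Prop :=
  is_subgroup mul inv e H /\ exists h, H h /\ h <> e.

Definition NSS mul inv e open : Prop :=
  exists N, neighborhood open e N /\
    forall H, nontrivial_subgroup mul inv e H -> ~ (forall z, H z -> N z).

Definition continuous2 (open : (G -> Prop) -> Prop) (d : G -> G -> R) : Prop :=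
  forall x y eps, 0 < eps -> exists U V, open U /\ open V /\ U x /\ V y /\
     forall u v, U u -> V v -> Rabs (d u v - d x y) < eps.

Fixpoint gpow_nat (mul : G -> G -> G) (e : G) (n : nat) (x : G) : G :=
  match n with O => e | S k => mul x (gpow_nat mul e k x) end.

Definition zpow (mul : G -> G -> G) (inv : G -> G) (e : G) (m : Z) (x : G) : G :=
  match m with
  | Z0 => e
  | Zpos p => gpow_nat mul e (Pos.to_nat p) x
  | Zneg p => inv (gpow_nat mul e (Pos.to_nat p) x)
  end.

End TopGroupDefs.

(* Main.v *)
Require Import Defs.
From Stdlib Require Import Reals ZArith Lra Classical ClassicalEpsilon.
Open Scope R_scope.

Lemma sub_pow {G : Type} (mul : G -> G -> G) inv (e : G) H :
  is_subgroup mul inv e H -> forall x m, H x -> H (zpow mul inv e m x).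
Proof.
  intros [He [Hm Hi]] x m Hx.
  assert (Hn : forall k, H (gpow_nat mul e k x)).
  { induction k; simpl; auto. }
  destruct m; simpl; auto.
Qed.

Theorem lemma5p2 (G : Type) (mul : G -> G -> G) (inv : G -> G) (e : G)
    (open : (G -> Prop) -> Prop)
    (Htg : is_topological_group mul inv e open)
    (Hhaus : hausdorff open)
    (HnNSS : ~ NSS mul inv e open)
    (d : G -> G -> R)
    (Hdcont : continuous2 open d)
    (Hdnn : forall x y, 0 <= d x y)
    (Hdee : d e e = 0) :
  exists g : nat -> G, (forall n, g n <> e) /\
    forall m : nat -> Z, exists l : R,
      infinite_sum (fun n => d e (zpow mul inv e (m n) (g n))) l.
Proof.
  assert (Hex : forall n : nat, exists g, g <> e /\
             forall k, d e (zpow mul inv e k g) < (/2)^n).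
  { intro n.
    assert (Hp : 0 < (/2)^n) by (apply pow_lt; lra).
    destruct (Hdcont e e _ Hp) as [U [V [_ [HV [HUe [HVe Hd]]]]]].
    assert (HN : neighborhood open e (fun z => d e z < (/2)^n)).
    { exists V; split; [|split]; auto.
      intros z Hz. specialize (Hd e z HUe Hz). rewrite Hdee in Hd.
      apply Rabs_def2 in Hd. lra. }
    apply NNPP; intro Hno. apply HnNSS.
    exists (fun z => d e z < (/2)^n); split; auto.
    intros H [Hsub [h [Hh Hhe]]] Hincl. apply Hno.
    exists h; split; auto. intro k. apply Hincl. apply sub_pow; auto. }
  destruct (choice _ Hex) as [g Hg].
  exists g; split; [intro n; apply (proj1 (Hg n))|].
  intro m.
  assert (Hgp : {l | Un_cv (fun N => sum_f_R0 (fun n => (/2)^n) N) l}).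
  { exists (/(1 - /2)). intros eps Heps.
    destruct (GP_infinite (/2) ltac:(rewrite Rabs_pos_eq; lra) eps Heps) as [N HN].
    exists N. intros n Hn. specialize (HN n Hn).
    replace (sum_f_R0 (fun n0 => (/2)^n0) n)
      with (sum_f_R0 (fun n0 => 1 * (/2)^n0) n); auto.
    apply sum_eq; intros; ring. }
  destruct (Rseries_CV_comp (fun n => d e (zpow mul inv e (m n) (g n)))
              (fun n => (/2)^n)) as [l Hl].
  { intro n. split; auto. left. apply (proj2 (Hg n)). }
  { exact Hgp. }
  exists l. exact Hl.
Qed.
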